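(* Let $l\le k$ be non-negative integers. Then $S(k,k,l)=\binom{k}{l}^2$.
   Context: A Dyck path of semilength $k$ (Dyck $k$-path) is a lattice path in $\mathbb{Z}^2$ starting at $(0,0)$, ending at $(2k,0)$, never going below the $x$-axis, each of whose $2k$ steps is either a rise $(1,1)$ or a fall $(1,-1)$. For a Dyck $k$-path $D$ and non-negative integers $l\le m\le 2k$, $S(D,m,l)$ denotes the number of intervals of length $m$ in $D$ (i.e. blocks of $m$ consecutive steps of $D$, one for each starting position $s\in\{1,\dots,2k-m+1\}$) that contain exactly $l$ falls; and $S(k,m,l)=\sum_{D} S(D,m,l)$, the sum over all Dyck $k$-paths $D$. *)

(* Defs.v *)
From mathcomp Require Import all_boot.
Set Implicit Arguments. Unset Strict Implicit. Unset Printing Implicit Defensive.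

(* A lattice path with steps in {rise, fall} is encoded as a sequence of
   booleans: true = rise (1,1), false = fall (1,-1). *)

Definition nrises (s : seq bool) : nat := count id s.
Definition nfalls (s : seq bool) : nat := count negb s.

Definition is_dyck (k : nat) (D : seq bool) : bool :=
  [&& size D == 2 * k,
      all (fun i => nfalls (take i D) <= nrises (take i D)) (iota 0 (size D).+1)
    & nfalls D == nrises D].

(* the interval of length m starting at (1-based) position s+1 *)
Definition interval (D : seq bool) (s m : nat) : seq bool := take m (drop s D).

(* S(D,m,l): number of starting positions s in {1,...,|D|-m+1} such that the
   block of m consecutive steps starting at s contains exactly l falls *)
Definition SD (D : seq bool) (m l : nat) : nat :=
  count (fun s => nfalls (interval D s m) == l) (iota 0 (size D - m).+1).

Definition Skml (k m l : nat) : nat :=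
  \sum_(D : (2 * k).-tuple bool | is_dyck k D) SD D m l.

(* Main.v *)
Require Import Defs.
From mathcomp Require Import all_boot.
From mathcomp Require Import zify.
Set Implicit Arguments. Unset Strict Implicit. Unset Printing Implicit Defensive.

Fixpoint depth (s : seq bool) : nat :=
  if s is b :: s' then (if b then (depth s').-1 else (depth s').+1) else 0.

Lemma nrises_cons b s : nrises (b :: s) = b + nrises s.
Proof. by []. Qed.
Lemma nfalls_cons b s : nfalls (b :: s) = ~~ b + nfalls s.
Proof. by []. Qed.
Lemma nrises_cat s t : nrises (s ++ t) = nrises s + nrises t.
Proof. exact: count_cat. Qed.
Lemma nfalls_cat s t : nfalls (s ++ t) = nfalls s + nfalls t.
Proof. exact: count_cat. Qed.
Lemma size_rf s : nrises s + nfalls s = size s.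
Proof. by elim: s => [|[] s IH] //=; rewrite ?nrises_cons ?nfalls_cons /=; lia. Qed.

Lemma depth_ge s : nfalls s <= depth s + nrises s.
Proof. elim: s => [|[] s IH] //=; rewrite /nfalls /nrises /= in IH *; lia. Qed.

Lemma depth_cat s1 s2 :
  depth (s1 ++ s2) = maxn (depth s1) (depth s2 + nfalls s1 - nrises s1).
Proof.
elim: s1 => [|[] s1 IH] /=; first by rewrite /nfalls /nrises /=; lia.
  rewrite IH /nfalls /nrises /=; lia.
rewrite IH /nfalls /nrises /=; lia.
Qed.

Lemma depth_le s j :
  (depth s <= j) <-> (forall i, nfalls (take i s) <= nrises (take i s) + j).
Proof.
elim: s j => [|b s IH] j /=.
  split=> // _ i; rewrite take0 /=; lia.
case: b.
  have := IH j.+1; move=> [H1 H2]; split.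
    move=> Hd [|i] /=; first by rewrite /nfalls /nrises /=; lia.
    have := H1 (ltac:(lia)) i; rewrite /nfalls /nrises /=; lia.
  move=> H; have : depth s <= j.+1.
    apply: H2 => i; have := H i.+1; rewrite /nfalls /nrises /=; lia.
  lia.
have := IH j.-1; move=> [H1 H2]; split.
  move=> Hd [|i] /=; first by rewrite /nfalls /nrises /=; lia.
  have := H1 (ltac:(lia)) i; rewrite /nfalls /nrises /=; lia.
move=> H; have j0 : 0 < j by have := H 1; rewrite /nfalls /nrises /= take0 /=; lia.
have : depth s <= j.-1.
  apply: H2 => i; have := H i.+1; rewrite /nfalls /nrises /=; lia.
lia.
Qed.

Lemma all_prefix D :
  all (fun i => nfalls (take i D) <= nrises (take i D)) (iota 0 (size D).+1)
  = (depth D == 0).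
Proof.
apply/idP/idP.
  move/allP=> H; have : depth D <= 0.
    apply/depth_le => i; rewrite addn0.
    case: (leqP i (size D)) => hi.
      by apply: H; rewrite mem_iota /=; lia.
    rewrite take_oversize; last by lia.
    have := H (size D); rewrite take_size; apply; rewrite mem_iota; lia.
  lia.
move=> /eqP H; apply/allP => i _.
have := (proj1 (depth_le D 0)) (ltac:(lia)) i; lia.
Qed.

Fixpoint allb n : seq (seq bool) :=
  if n is n'.+1 then map (cons true) (allb n') ++ map (cons false) (allb n')
  else [:: [::]].

Lemma cons_injective (b : bool) : injective (cons b).
Proof. by move=> x y [->]. Qed.

Lemma mem_allb n s : (s \in allb n) = (size s == n).
Proof.
elim: n s => [|n IH] s.
  by case: s => [|b s] //=; rewrite in_cons orbF.
case: s => [|b s] /=.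
  by rewrite mem_cat; apply/negbTE/negP => /orP [] /mapP [].
rewrite mem_cat; case: b.
  rewrite (mem_map (@cons_injective true)) IH.
  apply/orP/idP; last by move=> H; left.
  by case=> // /mapP [x _].
rewrite (mem_map (@cons_injective false)) IH.
apply/orP/idP; last by move=> H; right.
by case=> // /mapP [x _].
Qed.

Lemma uniq_allb n : uniq (allb n).
Proof.
elim: n => [|n IH] //=.
rewrite cat_uniq (map_inj_uniq (@cons_injective true))
  (map_inj_uniq (@cons_injective false)) IH andbT /=.
by apply/hasPn => x /mapP [y _ ->]; apply/mapP => [[z _]].
Qed.

Lemma big_allb_split m n (F : seq bool -> nat) :
  \sum_(x <- allb (m + n)) F x = \sum_(y <- allb m) \sum_(z <- allb n) F (y ++ z).
Proof.
elim: m F => [|m IH] F; first by rewrite add0n big_seq1.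
rewrite addSn /= !big_cat !big_map /= !IH //.
Qed.

Lemma sum_tuple n (P : pred (seq bool)) (F : seq bool -> nat) :
  \sum_(t : n.-tuple bool | P t) F t = \sum_(s <- allb n | P s) F s.
Proof.
rewrite -(big_map (@tval n bool) P F).
apply: perm_big; apply: uniq_perm.
- rewrite map_inj_uniq; [exact: index_enum_uniq | exact: val_inj].
- exact: uniq_allb.
move=> s; rewrite mem_allb; apply/mapP/idP.
  by move=> [t _ ->]; rewrite size_tuple.
move=> /eqP H; exists (Tuple (introT eqP H)) => //; exact: mem_index_enum.
Qed.

Lemma count_rises n u : count (fun s => nrises s == u) (allb n) = 'C(n, u).
Proof.
elim: n u => [|n IH] u; first by case: u.
rewrite /= count_cat !count_map.
case: u => [|u].
  rewrite bin0 (eq_count (a2 := pred0)) ?count_pred0 /=; last by move=> s /=.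
  rewrite (eq_count (a2 := fun s => nrises s == 0)) ?IH ?bin0 //.
rewrite binS -(IH u) -(IH u.+1) addnC; congr (_ + _); apply: eq_count => s /=; lia.
Qed.

Lemma count_falls n u : count (fun s => nfalls s == u) (allb n) = 'C(n, u).
Proof.
elim: n u => [|n IH] u; first by case: u.
rewrite /= count_cat !count_map.
case: u => [|u].
  rewrite bin0 (eq_count (a2 := fun s => nfalls s == 0)) ?IH ?bin0; last by [].
  by rewrite (eq_count (a2 := pred0)) ?count_pred0.
rewrite binS -(IH u) -(IH u.+1); congr (_ + _); apply: eq_count => s /=; lia.
Qed.

Lemma reflection n u x : n <= x + 2 * u ->
  count (fun s => (nrises s == u) && (x <= depth s)) (allb n) = 'C(n, u + x).
Proof.
elim: n u x => [|n IH] u x hn.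
  by case: u x {hn} => [|u] [|x].
case: x hn => [|x] hn.
  rewrite addn0 -count_rises; apply: eq_count => s /=; by rewrite andbT.
rewrite /= count_cat !count_map.
case: u hn => [|u] hn.
  rewrite (eq_count (a2 := pred0)) ?count_pred0 /=; last by move=> s /=.
  rewrite (eq_count (a2 := fun s => (nrises s == 0) && (x <= depth s))); last first.
    by move=> s /=; congr andb; lia.
  rewrite IH; last lia.
  rewrite !add0n binS (bin_small (n := n) (m := x.+1)) ?addn0 //; lia.
rewrite (eq_count (a2 := fun s => (nrises s == u) && (x.+2 <= depth s))); last first.
  by move=> s /=; congr andb; lia.
rewrite [X in _ + X](eq_count (a2 := fun s => (nrises s == u.+1) && (x <= depth s))); last first.
  by move=> s /=; congr andb; lia.
rewrite !IH; try lia.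
have -> : u.+1 + x.+1 = (u.+1 + x).+1 by lia.
rewrite binS; have -> : u + x.+2 = (u.+1 + x).+1 by lia. by rewrite addnC.
Qed.

Definition dyckb (D : seq bool) : bool := (depth D == 0) && (nrises D == nfalls D).

Definition G (V W : seq bool) : nat :=
  \sum_(j <- iota 0 (size V)) (nth false V j && dyckb (drop j.+1 V ++ W ++ take j V)).

Lemma G_rcons V b W : G (rcons V b) W = (b && dyckb (W ++ V)) + G V (b :: W).
Proof.
rewrite /G size_rcons -addn1 iotaD big_cat big_seq1 /= addnC; congr (_ + _).
  by rewrite add0n nth_rcons ltnn eqxx drop_oversize ?size_rcons // -cats1 take_size_cat.
rewrite big_seq_cond [RHS]big_seq_cond; apply: eq_bigr => j; rewrite mem_iota andbT => /andP [_ hj].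
rewrite nth_rcons hj drop_rcons // -[X in take _ X]cats1 takel_cat; last by apply: ltnW.
by rewrite cat_rcons.
Qed.

Definition xW (W : seq bool) := nrises W + depth W - nfalls W.

Lemma G_eq V W : G V W =
  ((nrises W + nrises V == (nfalls W + nfalls V).+1) && (xW W <= depth V)).
Proof.
elim/last_ind: V W => [|V b IH] W.
  rewrite /G /= big_nil /xW /nrises /nfalls /=; have := depth_ge W; rewrite /nrises /nfalls; lia.
rewrite G_rcons IH /xW /dyckb -cats1 !depth_cat !nrises_cat !nfalls_cat.
have := depth_ge W; have := depth_ge V.
case: b => /=; rewrite /nrises /nfalls /= /xW; lia.
Qed.

Lemma sum_bool_count (r : seq (seq bool)) (P : pred (seq bool)) :
  \sum_(x <- r) (P x : nat) = count P r.
Proof.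
elim: r => [|x r IH]; first by rewrite big_nil.
by rewrite big_cons IH.
Qed.

Lemma c_eq W k l : size W = k -> nfalls W = l ->
  \sum_(V <- allb k.+1) G V W = 'C(k.+1, (k - l + depth W).+1).
Proof.
move=> hs hf.
have hr : nrises W = k - l by have := size_rf W; lia.
have hd := depth_ge W.
rewrite big_seq (eq_bigr (fun V => ((nrises V == l.+1) && (xW W <= depth V) : nat))); last first.
  move=> V; rewrite mem_allb => /eqP hV; rewrite G_eq.
  have := size_rf V; rewrite hV => hV'; congr (nat_of_bool (_ && _)).
  apply/eqP/eqP; lia.
rewrite -big_seq sum_bool_count reflection /xW; last lia.
congr binomial; lia.
Qed.

Lemma count_fl k l x : l <= x + (k - l) ->
  count (fun Y => (nfalls Y == l) && (x <= depth Y)) (allb k) = 'C(k, k - l + x).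
Proof.
move=> h.
case: (leqP l k) => hlk.
  rewrite -reflection; last lia.
  apply: eq_in_count => Y; rewrite mem_allb => /eqP hY.
  have := size_rf Y; rewrite hY => hY'; congr andb; apply/eqP/eqP; lia.
rewrite (eq_in_count (a2 := pred0)) ?count_pred0; last first.
  move=> Y; rewrite mem_allb => /eqP hY.
  have := size_rf Y; rewrite hY => hY' /=; apply/negbTE; apply/negP => /andP [/eqP ? _]; lia.
rewrite bin_small //; lia.
Qed.

Lemma final k l :
  \sum_(W <- allb k) (nfalls W == l) * 'C(k.+1, (k - l + depth W).+1) = 'C(k, l) ^ 2.
Proof.
have step : forall W, W \in allb k -> (nfalls W == l) * 'C(k.+1, (k - l + depth W).+1)
  = \sum_(Y <- allb k) ((nfalls W == l) * (nfalls Y == l) * (depth W < depth Y)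
                       + (nfalls W == l) * (nfalls Y == l) * (depth W <= depth Y)).
  move=> W; rewrite mem_allb => /eqP hW.
  case: (eqVneq (nfalls W) l) => hf; last first.
    by rewrite mul0n big1 // => Y _; rewrite !mul0n.
  have hd := depth_ge W; have := size_rf W; rewrite hW => hr.
  rewrite mul1n binS big_split /=.
  rewrite (eq_bigr (fun Y => ((nfalls Y == l) && ((depth W).+1 <= depth Y) : nat)));
    last by move=> Y _; lia.
  rewrite [X in _ = _ + X](eq_bigr (fun Y => ((nfalls Y == l) && (depth W <= depth Y) : nat)));
    last by move=> Y _; lia.
  rewrite !sum_bool_count !count_fl; try lia.
  by congr (_ + _); congr binomial; lia.
rewrite big_seq (eq_bigr _ step) -big_seq.
rewrite (eq_bigr _ (fun W _ => big_split _ _ _ _ _)) big_split /=.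
rewrite [X in X + _]exchange_big /=.
rewrite -big_split /=.
rewrite (eq_bigr (fun W => \sum_(Y <- allb k) (nfalls W == l) * (nfalls Y == l))); last first.
  move=> W _; rewrite -big_split /=; apply: eq_bigr => Y _.
  case: (nfalls W == l); case: (nfalls Y == l); rewrite ?mul0n ?muln0 //=; lia.
rewrite (eq_bigr (fun i => (nfalls i == l) * \sum_(Y <- allb k) (nfalls Y == l))); last first.
  by move=> i _; rewrite big_distrr.
rewrite -big_distrl /= sum_bool_count count_falls.
by rewrite expnS expn1.
Qed.

Definition cW (k : nat) (W : seq bool) : nat :=
  \sum_(0 <= s < k.+1) \sum_(A <- allb s) \sum_(B <- allb (k - s)) dyckb (A ++ W ++ B).

Lemma cW_G k W : cW k W = \sum_(V <- allb k.+1) G V W.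
Proof.
rewrite /cW big_nat_rev.
rewrite [RHS]big_seq (eq_bigr (fun V => \sum_(0 <= j < k.+1)
   (nth false V j && dyckb (drop j.+1 V ++ W ++ take j V) : nat))); last first.
  by move=> V; rewrite mem_allb => /eqP hV; rewrite /G hV.
rewrite -[RHS]big_seq exchange_big.
apply: eq_big_nat => j /andP [_ hj].
rewrite add0n (_ : k.+1 - j.+1 = k - j); last lia.
rewrite (_ : k - (k - j) = j); last lia.
rewrite [in RHS](_ : k.+1 = j + (k - j).+1); last lia.
rewrite big_allb_split.
rewrite exchange_big big_seq [RHS]big_seq; apply: eq_bigr => B; rewrite mem_allb => /eqP hB.
rewrite big_cat !big_map /=.
rewrite [X in _ = _ + X]big1 ?addn0; last first.
  by move=> A _; rewrite nth_cat hB ltnn subnn.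
apply: eq_bigr => A _.
rewrite nth_cat hB ltnn subnn /= -cat_rcons drop_size_cat ?size_rcons ?hB //.
by rewrite cat_rcons take_size_cat.
Qed.

Lemma sum_count (T : Type) (r : seq T) (P : pred T) :
  \sum_(x <- r) (P x : nat) = count P r.
Proof. by elim: r => [|x r IH]; rewrite ?big_nil ?big_cons ?IH. Qed.

Lemma is_dyck_dyckb k D : size D = 2 * k -> is_dyck k D = dyckb D.
Proof.
move=> hD; rewrite /is_dyck /dyckb all_prefix hD eqxx /=; congr andb; exact: eq_sym.
Qed.

Theorem corollary2 (k l : nat) : l <= k -> Skml k k l = 'C(k, l) ^ 2.
Proof.
move=> _.
rewrite /Skml (@sum_tuple (2 * k) (fun D => is_dyck k D) (fun D => SD D k l)).
transitivity (\sum_(W <- allb k) (nfalls W == l) * cW k W); last first.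
  rewrite -(final k l) big_seq [RHS]big_seq; apply: eq_bigr => W; rewrite mem_allb => /eqP hW.
  case: (eqVneq (nfalls W) l) => hf; rewrite ?mul0n //.
  by rewrite !mul1n cW_G (c_eq hW hf).
rewrite big_mkcond [LHS]big_seq.
rewrite [LHS](eq_bigr (fun D => \sum_(0 <= s < k.+1) (dyckb D && (nfalls (take k (drop s D)) == l) : nat)));
  last first.
  move=> D; rewrite mem_allb => /eqP hD.
  rewrite is_dyck_dyckb // /SD hD (_ : 2 * k - k = k); last lia.
  rewrite /index_iota subn0 -sum_count.
  case: (dyckb D); first by [].
  by rewrite big1.
rewrite -[LHS]big_seq exchange_big /=.
transitivity (\sum_(0 <= s < k.+1) \sum_(W <- allb k) (nfalls W == l) *
   \sum_(A <- allb s) \sum_(B <- allb (k - s)) dyckb (A ++ W ++ B)); last first.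
  rewrite exchange_big /=; apply: eq_bigr => W _.
  by rewrite /cW big_distrr.
apply: eq_big_nat => s /andP [_ hs].
rewrite (_ : 2 * k = s + (k + (k - s))); last lia.
rewrite big_allb_split (eq_bigr _ (fun A _ => big_allb_split _ _ _)) /=.
rewrite exchange_big /=; apply: eq_big_seq => W; rewrite mem_allb => /eqP hW.
rewrite big_distrr /=; apply: eq_big_seq => A; rewrite mem_allb => /eqP hA.
rewrite big_distrr /=; apply: eq_bigr => B _.
rewrite drop_size_cat // take_size_cat //.
case: (dyckb _); case: (nfalls W == l) => //.
Qed.
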